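(* Let $A\subseteq\mathbb{N}$ and let $f\colon\deg_e(A)\to\mathcal{P}(\mathbb{N})$ be uniformly $e$-invariant and not constant. Then there is $B\in\deg_e(A)$ such that $f(A\oplus B)\neq f(A\oplus\varnothing)$ or $f(A\oplus B)\neq f(\varnothing\oplus B)$.
   Context: $X\oplus Y=\{2n:n\in X\}\cup\{2n+1:n\in Y\}$. Enumeration reducibility: for $A,B\subseteq\mathbb{N}$, $A\le_e B$ if $A=\Gamma(B):=\{n:\exists D\subseteq B,\ \langle n,D\rangle\in\Gamma\}$ for some c.e. set $\Gamma$ of pairs $\langle n,D\rangle$ with $D$ finite (canonical index); $(\Gamma_i)_{i\in\mathbb{N}}$ is the standard computable numbering of these enumeration operators. $A\equiv_e B$ iff $A\le_e B\le_e A$; $\deg_e(A)=\{B: B\equiv_e A\}$. Let $\mathcal{X}\subseteq\mathcal{P}(\mathbb{N})$ be closed under $\equiv_e$. A function $f\colon\mathcal{X}\to\mathcal{P}(\mathbb{N})$ is $e$-invariant if $A\equiv_e B$ implies $f(A)\equiv_e f(B)$. Write $A\equiv_e B$ via $\langle i,j\rangle$ if $\Gamma_i(A)=B$ and $\Gamma_j(B)=A$ (with $\langle\cdot,\cdot\rangle$ a fixed computable pairing bijection). A function $u\colon\mathbb{N}\to\mathbb{N}$ is a uniformity function for $f$ if for all $A,B\in\mathcal{X}$ and all $i,j$, whenever $A\equiv_e B$ via $\langle i,j\rangle$ then $f(A)\equiv_e f(B)$ via $u(\langle i,j\rangle)$. $f$ is uniformly $e$-invariant if it has some uniformity function. ''Not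 constant'' means there are $C,D\in\deg_e(A)$ with $f(C)\neq f(D)$. *)

(* Defs.v *)
From mathcomp Require Import all_boot.
Set Implicit Arguments.
Unset Strict Implicit.
Unset Printing Implicit Defensive.

Definition natset := nat -> bool.

Definition emptyset : natset := fun _ => false.

Definition join (X Y : natset) : natset :=
  fun m => if odd m then Y m./2 else X m./2.

Definition cpair (a b : nat) : nat := ((a + b) * (a + b).+1) %/ 2 + b.

(* canonical index: D_x = { k | bit k of x is 1 } *)
Definition canon (x : nat) : nat -> bool := fun k => Nat.testbit x k.

Inductive prf : Type :=
| PZero : prf
| PSucc : prf
| PProj : nat -> prf
| PComp : prf -> seq prf -> prf
| PRec  : prf -> prf -> prf
| PMu   : prf -> prf.

Inductive eval : prf -> seq nat -> nat -> Prop :=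
| ev_zero v : eval PZero v 0
| ev_succ v : eval PSucc v (head 0 v).+1
| ev_proj i v : eval (PProj i) v (nth 0 v i)
| ev_comp f gs v ws y : evals gs v ws -> eval f ws y -> eval (PComp f gs) v y
| ev_rec0 f g v y : eval f v y -> eval (PRec f g) (0 :: v) y
| ev_recS f g n v z y :
    eval (PRec f g) (n :: v) z -> eval g (n :: z :: v) y ->
    eval (PRec f g) (n.+1 :: v) y
| ev_mu f v n :
    eval f (n :: v) 0 -> (forall m, m < n -> exists k, eval f (m :: v) k.+1) ->
    eval (PMu f) v n
with evals : seq prf -> seq nat -> seq nat -> Prop :=
| evs_nil v : evals [::] v [::]
| evs_cons g gs v w ws : eval g v w -> evals gs v ws -> evals (g :: gs) v (w :: ws).

(* decoding of codes from generic trees (GenTree.tree nat is a countType) *)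
Fixpoint decode (t : GenTree.tree nat) : prf :=
  match t with
  | GenTree.Leaf i => PProj i
  | GenTree.Node 0 _ => PZero
  | GenTree.Node 1 _ => PSucc
  | GenTree.Node 2 (f :: gs) => PComp (decode f) (map decode gs)
  | GenTree.Node 3 (f :: g :: _) => PRec (decode f) (decode g)
  | GenTree.Node 4 (f :: _) => PMu (decode f)
  | GenTree.Node _ _ => PZero
  end.

Definition program (e : nat) : prf :=
  match (unpickle e : option (GenTree.tree nat)) with
  | Some t => decode t
  | None => PZero
  end.

Definition W (e : nat) (x : nat) : Prop := exists y, eval (program e) [:: x] y.

(* Gamma_i(A) = { n | exists D finite, D subset A, <n, D> in W_i } *)
Definition Gamma (i : nat) (A : natset) (n : nat) : Prop :=
  exists x, W i (cpair n x) /\ (forall k, canon x k -> A k).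

Definition Gamma_eq (i : nat) (A B : natset) : Prop :=
  forall n, Gamma i A n <-> B n.

Definition e_le (A B : natset) : Prop := exists i, Gamma_eq i B A.
Definition e_equiv (A B : natset) : Prop := e_le A B /\ e_le B A.

Definition deg_e (A : natset) : natset -> Prop := fun B => e_equiv B A.

Definition equiv_via (k : nat) (A B : natset) : Prop :=
  exists i j, k = cpair i j /\ Gamma_eq i A B /\ Gamma_eq j B A.

Definition uniformity_function (X : natset -> Prop) (f : natset -> natset)
    (u : nat -> nat) : Prop :=
  forall A B, X A -> X B -> forall i j,
    equiv_via (cpair i j) A B -> equiv_via (u (cpair i j)) (f A) (f B).

Definition uniformly_e_invariant (X : natset -> Prop) (f : natset -> natset) : Prop :=
  exists u, uniformity_function X f u.

Definition not_constant_on (X : natset -> Prop) (f : natset -> natset) : Prop :=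
  exists C D, X C /\ X D /\ f C <> f D.

(* Main.v *)
From Stdlib Require Import PeanoNat Classical FunctionalExtensionality.
Require Import Defs.
From mathcomp Require Import all_boot zify.
Set Implicit Arguments. Unset Strict Implicit. Unset Printing Implicit Defensive.

Definition cmpt (c : prf) (F : seq nat -> nat) := forall v y, eval c v y <-> y = F v.
Definition cmpts (gs : seq prf) (Fs : seq nat -> seq nat) :=
  forall v ws, evals gs v ws <-> ws = Fs v.

Lemma cmpts_nil : cmpts [::] (fun _ => [::]).
Proof. move=> v ws; split; [by move=> H; inversion H | by move=> ->; constructor]. Qed.

Lemma cmpts_cons g gs G Gs : cmpt g G -> cmpts gs Gs ->
  cmpts (g :: gs) (fun v => G v :: Gs v).
Proof.
move=> hg hgs v ws; split.
- move=> H; inversion H; subst.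
  match goal with Ha : eval g _ _, Hb : evals gs _ _ |- _ => by rewrite (proj1 (hg _ _) Ha) (proj1 (hgs _ _) Hb) end.
- move=> ->; constructor; [exact/hg | exact/hgs].
Qed.

Lemma cmpt_zero : cmpt PZero (fun _ => 0).
Proof. move=> v y; split; [by move=> H; inversion H | by move=> ->; constructor]. Qed.
Lemma cmpt_succ : cmpt PSucc (fun v => (head 0 v).+1).
Proof. move=> v y; split; [by move=> H; inversion H | by move=> ->; constructor]. Qed.
Lemma cmpt_proj i : cmpt (PProj i) (fun v => nth 0 v i).
Proof. move=> v y; split; [by move=> H; inversion H | by move=> ->; constructor]. Qed.

Lemma cmpt_pcomp f gs F Gs : cmpt f F -> cmpts gs Gs ->
  cmpt (PComp f gs) (fun v => F (Gs v)).
Proof.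
move=> hf hgs v y; split.
- move=> H; inversion H; subst.
  match goal with Ha : evals _ _ _ |- _ => move/hgs: Ha => Ha; subst; exact/hf end.
- move=> ->; apply: (@ev_comp _ _ _ (Gs v)); [exact/hgs | exact/hf].
Qed.

Fixpoint iterR (F G : seq nat -> nat) n v :=
  match n with 0 => F v | n'.+1 => G (n' :: iterR F G n' v :: v) end.

Lemma cmpt_rec f g F G : cmpt f F -> cmpt g G ->
  forall n v y, eval (PRec f g) (n :: v) y <-> y = iterR F G n v.
Proof.
move=> hf hg; elim=> [|n IH] v y; split.
- move=> H; inversion H; subst; exact/hf.
- move=> ->; constructor; exact/hf.
- move=> H; inversion H; subst.
  match goal with Ha : eval (PRec f g) _ _ |- _ => move/IH: Ha => Ha; subst; exact/hg end.
- move=> ->; apply: (@ev_recS _ _ _ _ (iterR F G n v)); [exact/IH | exact/hg].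
Qed.

Lemma cmpt_mu f F v n : cmpt f F ->
  (eval (PMu f) v n <-> F (n :: v) = 0 /\ forall m, m < n -> F (m :: v) <> 0).
Proof.
move=> hf; split.
- move=> H; inversion H; subst; split.
  match goal with Ha : eval f _ 0 |- _ => by rewrite -(proj1 (hf _ _) Ha) end.
  move=> m Hm; case: (H2 m Hm) => [k /hf <-] //.
- move=> [H0 H1]; constructor; first by apply/hf.
  move=> m /H1 Hm; exists (F (m :: v)).-1; apply/hf; rewrite prednK //; lia.
Qed.

Lemma cmpt_app1 f F c C : cmpt f F -> cmpt c C ->
  cmpt (PComp f [:: c]) (fun v => F [:: C v]).
Proof. move=> hf hc; exact: (cmpt_pcomp hf (cmpts_cons hc cmpts_nil)). Qed.
Lemma cmpt_app2 f F c1 C1 c2 C2 : cmpt f F -> cmpt c1 C1 -> cmpt c2 C2 ->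
  cmpt (PComp f [:: c1; c2]) (fun v => F [:: C1 v; C2 v]).
Proof. move=> hf h1 h2; exact: (cmpt_pcomp hf (cmpts_cons h1 (cmpts_cons h2 cmpts_nil))). Qed.

Lemma cmpt_rec1 f g F G c C : cmpt f F -> cmpt g G -> cmpt c C ->
  cmpt (PComp (PRec f g) [:: c]) (fun v => iterR F G (C v) [::]).
Proof.
move=> hf hg hc v y; split.
- move=> H; inversion H; subst.
  match goal with Ha : evals _ _ _ |- _ => move/(cmpts_cons hc cmpts_nil): Ha => Ha; subst; exact/(cmpt_rec hf hg) end.
- move=> ->; apply: (@ev_comp _ _ _ [:: C v]).
  + exact/(cmpts_cons hc cmpts_nil).
  + exact/(cmpt_rec hf hg).
Qed.
Lemma cmpt_rec2 f g F G c1 C1 c2 C2 : cmpt f F -> cmpt g G -> cmpt c1 C1 -> cmpt c2 C2 ->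
  cmpt (PComp (PRec f g) [:: c1; c2]) (fun v => iterR F G (C1 v) [:: C2 v]).
Proof.
move=> hf hg h1 h2 v y; have hs := cmpts_cons h1 (cmpts_cons h2 cmpts_nil); split.
- move=> H; inversion H; subst.
  match goal with Ha : evals _ _ _ |- _ => move/hs: Ha => Ha; subst; exact/(cmpt_rec hf hg) end.
- move=> ->; apply: (@ev_comp _ _ _ [:: C1 v; C2 v]).
  + exact/hs.
  + exact/(cmpt_rec hf hg).
Qed.

Definition one := PComp PSucc [:: PZero].
Definition Succ c := PComp PSucc [:: c].
Definition Add c1 c2 := PComp (PRec (PProj 0) (Succ (PProj 1))) [:: c1; c2].
Definition Pred c := PComp (PRec PZero (PProj 0)) [:: c].
Definition Sub c1 c2 := PComp (PRec (PProj 0) (Pred (PProj 1))) [:: c2; c1].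
Definition Mul c1 c2 := PComp (PRec PZero (Add (PProj 1) (PProj 2))) [:: c1; c2].
Definition OddP c := PComp (PRec PZero (Sub one (PProj 1))) [:: c].
Definition Half c := PComp (PRec PZero (Add (PProj 1) (OddP (PProj 0)))) [:: c].
Definition Shr x k := PComp (PRec (PProj 0) (Half (PProj 1))) [:: k; x].
Definition Bit x k := OddP (Shr x k).
Definition Pow2 c := PComp (PRec one (Add (PProj 1) (PProj 1))) [:: c].
Definition Tri c := PComp (PRec PZero (Add (PProj 1) (Succ (PProj 0)))) [:: c].
Definition Cp a b := Add (Tri (Add a b)) b.

Lemma cmpt_ext c F G : cmpt c F -> (forall v, F v = G v) -> cmpt c G.
Proof. by move=> h e v y; rewrite -e. Qed.

Lemma c_one : cmpt one (fun _ => 1).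
Proof. exact: (cmpt_app1 cmpt_succ cmpt_zero). Qed.
Lemma c_Succ c C : cmpt c C -> cmpt (Succ c) (fun v => (C v).+1).
Proof. move=> h; exact: (cmpt_app1 cmpt_succ h). Qed.

Lemma c_Add c1 C1 c2 C2 : cmpt c1 C1 -> cmpt c2 C2 -> cmpt (Add c1 c2) (fun v => C1 v + C2 v).
Proof.
move=> h1 h2; apply: cmpt_ext (cmpt_rec2 (cmpt_proj 0) (c_Succ (cmpt_proj 1)) h1 h2) _.
move=> v /=; elim: (C1 v) => //= n ->; by rewrite addSn.
Qed.
Lemma c_Pred c C : cmpt c C -> cmpt (Pred c) (fun v => (C v).-1).
Proof.
move=> h; apply: cmpt_ext (cmpt_rec1 cmpt_zero (cmpt_proj 0) h) _.
by move=> v /=; case: (C v).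
Qed.
Lemma c_Sub c1 C1 c2 C2 : cmpt c1 C1 -> cmpt c2 C2 -> cmpt (Sub c1 c2) (fun v => C1 v - C2 v).
Proof.
move=> h1 h2; apply: cmpt_ext (cmpt_rec2 (cmpt_proj 0) (c_Pred (cmpt_proj 1)) h2 h1) _.
move=> v /=; elim: (C2 v) => /= [|n ->]; [by rewrite subn0 | by rewrite subnS].
Qed.
Lemma c_Mul c1 C1 c2 C2 : cmpt c1 C1 -> cmpt c2 C2 -> cmpt (Mul c1 c2) (fun v => C1 v * C2 v).
Proof.
move=> h1 h2; apply: cmpt_ext (cmpt_rec2 cmpt_zero (c_Add (cmpt_proj 1) (cmpt_proj 2)) h1 h2) _.
move=> v /=; elim: (C1 v) => //= n ->; by rewrite mulSn addnC.
Qed.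
Lemma c_OddP c C : cmpt c C -> cmpt (OddP c) (fun v => nat_of_bool (odd (C v))).
Proof.
move=> h; apply: cmpt_ext (cmpt_rec1 cmpt_zero (c_Sub c_one (cmpt_proj 1)) h) _.
move=> v /=; elim: (C v) => //= n ->; by case: (odd n).
Qed.
Lemma c_Half c C : cmpt c C -> cmpt (Half c) (fun v => (C v)./2).
Proof.
move=> h; apply: cmpt_ext (cmpt_rec1 cmpt_zero (c_Add (cmpt_proj 1) (c_OddP (cmpt_proj 0))) h) _.
move=> v /=; elim: (C v) => //= n ->; by rewrite uphalf_half addnC.
Qed.
Lemma c_Shr x X k K : cmpt x X -> cmpt k K -> cmpt (Shr x k) (fun v => iter (K v) half (X v)).
Proof.
move=> hx hk; apply: cmpt_ext (cmpt_rec2 (cmpt_proj 0) (c_Half (cmpt_proj 1)) hk hx) _.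
by move=> v /=; elim: (K v) => //= n ->.
Qed.
Lemma c_Bit x X k K : cmpt x X -> cmpt k K ->
  cmpt (Bit x k) (fun v => nat_of_bool (odd (iter (K v) half (X v)))).
Proof. move=> hx hk; exact: c_OddP (c_Shr hx hk). Qed.
Lemma c_Pow2 c C : cmpt c C -> cmpt (Pow2 c) (fun v => Nat.pow 2 (C v)).
Proof.
move=> h; apply: cmpt_ext (cmpt_rec1 c_one (c_Add (cmpt_proj 1) (cmpt_proj 1)) h) _.
move=> v /=; elim: (C v) => //= n ->; lia.
Qed.
Fixpoint tri n := if n is n'.+1 then tri n' + n'.+1 else 0.
Lemma c_Tri c C : cmpt c C -> cmpt (Tri c) (fun v => tri (C v)).
Proof.
move=> h; apply: cmpt_ext (cmpt_rec1 cmpt_zero (c_Add (cmpt_proj 1) (c_Succ (cmpt_proj 0))) h) _.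
by move=> v /=; elim: (C v) => //= n ->.
Qed.
Lemma c_Cp a A b B : cmpt a A -> cmpt b B -> cmpt (Cp a b) (fun v => tri (A v + B v) + B v).
Proof. move=> ha hb; exact: c_Add (c_Tri (c_Add ha hb)) hb. Qed.

Definition Oddbits y := PComp (PRec PZero (Add (PProj 1)
   (Mul (Bit (PProj 2) (Succ (Add (PProj 0) (PProj 0)))) (Pow2 (PProj 0))))) [:: y; y].
Fixpoint obits n y := if n is n'.+1 then
  obits n' y + odd (iter (n'+n').+1 half y) * Nat.pow 2 n' else 0.
Lemma c_Oddbits y Y : cmpt y Y -> cmpt (Oddbits y) (fun v => obits (Y v) (Y v)).
Proof.
move=> h; apply: cmpt_ext (cmpt_rec2 cmpt_zero (c_Add (cmpt_proj 1)
  (c_Mul (c_Bit (cmpt_proj 2) (c_Succ (c_Add (cmpt_proj 0) (cmpt_proj 0))))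
         (c_Pow2 (cmpt_proj 0)))) h h) _.
move=> v; move: (Y v) => z /=.
elim: {1 3}z => //= n ->.
by [].
Qed.

Lemma tri_mono a b : a <= b -> tri a <= tri b.
Proof.
move=> /subnKC <-; elim: (b - a) => [|n IH]; first by rewrite addn0.
rewrite addnS /=; lia.
Qed.

Fixpoint wfun m := if m is m'.+1 then
  (if m'.+1 < tri (wfun m').+1 then wfun m' else (wfun m').+1) else 0.
Lemma wfun_spec m : tri (wfun m) <= m < tri (wfun m).+1.
Proof.
elim: m => [|m IH] //=.
case: ifP => H; first by (apply/andP; split; lia).
move: IH H; set w := wfun m => /= IH H; lia.
Qed.
Lemma wfun_uniq w m : tri w <= m < tri w.+1 -> w = wfun m.
Proof.
move=> Hw; have Hm := wfun_spec m; set w' := wfun m in Hm *.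
case: (ltngtP w w') => // H.
- have := tri_mono H; lia.
- have := tri_mono H; lia.
Qed.

Definition Wp c := PComp (PMu (Sub (Succ (PProj 1)) (Tri (Succ (PProj 0))))) [:: c].
Lemma c_Wp c C : cmpt c C -> cmpt (Wp c) (fun v => wfun (C v)).
Proof.
move=> h; apply: (cmpt_app1 (F := fun w => wfun (head 0 w))) h => w y.
rewrite (cmpt_mu _ _ (c_Sub (c_Succ (cmpt_proj 1)) (c_Tri (c_Succ (cmpt_proj 0))))) /=.
rewrite (_ : nth 0 w 0 = head 0 w); last by case: w.
set m := head 0 w; split.
- move=> [H0 H1]; apply: wfun_uniq; apply/andP; split; last by rewrite /=; lia.
  case: y H0 H1 => [|k] H0 H1 //=; have := H1 k (ltnSn k); lia.
- move=> ->; have := wfun_spec m; move=> /andP [h1 h2]; split; first by move: h2 => /=; lia.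
  move=> k Hk; have := tri_mono Hk; move: h1 => /=; lia.
Qed.

Definition sndf m := m - tri (wfun m).
Definition fstf m := wfun m - sndf m.
Definition Snd c := Sub c (Tri (Wp c)).
Definition Fst c := Sub (Wp c) (Snd c).
Lemma c_Snd c C : cmpt c C -> cmpt (Snd c) (fun v => sndf (C v)).
Proof. move=> h; exact: c_Sub h (c_Tri (c_Wp h)). Qed.
Lemma c_Fst c C : cmpt c C -> cmpt (Fst c) (fun v => fstf (C v)).
Proof. move=> h; exact: c_Sub (c_Wp h) (c_Snd h). Qed.

Lemma tri_eq n : tri n = (n * n.+1) %/ 2.
Proof.
suff H : tri n * 2 = n * n.+1 by rewrite -H mulnK.
elim: n => //= n IH; rewrite mulnDl IH; nia.
Qed.
Lemma cpairE a b : cpair a b = tri (a + b) + b.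
Proof. by rewrite /cpair tri_eq. Qed.
Lemma wfun_cpair a b : wfun (cpair a b) = a + b.
Proof. rewrite cpairE; symmetry; apply: wfun_uniq => /=; lia. Qed.
Lemma sndf_cpair a b : sndf (cpair a b) = b.
Proof. rewrite /sndf wfun_cpair cpairE; lia. Qed.
Lemma fstf_cpair a b : fstf (cpair a b) = a.
Proof. rewrite /fstf sndf_cpair wfun_cpair; lia. Qed.
Lemma cpair_inj a b c d : cpair a b = cpair c d -> a = c /\ b = d.
Proof.
move=> e; split; first by rewrite -(fstf_cpair a b) e fstf_cpair.
by rewrite -(sndf_cpair a b) e sndf_cpair.
Qed.

Definition Halt h := PMu (PComp h [:: PProj 1]).
Lemma halt_spec h H m : cmpt h H -> (exists y, eval (Halt h) [:: m] y) <-> H [:: m] = 0.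
Proof.
move=> hh; have hf := cmpt_app1 hh (cmpt_proj 1); split.
- by move=> [y /(cmpt_mu _ _ hf) /= [-> _]].
- move=> H0; exists 0; apply/(cmpt_mu _ _ hf) => /=; by split.
Qed.
Lemma halt_pcomp1 f c C v : cmpt c C ->
  (exists y, eval (PComp f [:: c]) v y) <-> exists y, eval f [:: C v] y.
Proof.
move=> hc; split.
- move=> [y H]; inversion H; subst.
  match goal with Ha : evals _ _ _ |- _ => move/(cmpts_cons hc cmpts_nil): Ha => Ha; subst end.
  by exists y.
- move=> [y H]; exists y; apply: (@ev_comp _ _ _ [:: C v]) => //.
  exact/(cmpts_cons hc cmpts_nil).
Qed.
Lemma halt_pcomp2 c1 c2 v :
  (exists y, eval (PComp (PProj 0) [:: c1; c2]) v y) <->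
  (exists y, eval c1 v y) /\ (exists y, eval c2 v y).
Proof.
split.
- move=> [y H]; inversion H; subst.
  match goal with Ha : evals _ _ _ |- _ => inversion Ha; subst end.
  match goal with Ha : evals [:: c2] _ _ |- _ => inversion Ha; subst end.
  split; eexists; eassumption.
- move=> [[y1 H1] [y2 H2]]; exists y1.
  apply: (@ev_comp _ _ _ [:: y1; y2]); first by repeat constructor.
  exact: ev_proj.
Qed.

Lemma div2_half n : Nat.div2 n = n./2 /\ Nat.div2 n.+1 = uphalf n.
Proof. elim: n => [|n [IH1 IH2]] //=; split => //; by rewrite IH1. Qed.
Lemma odd_Nat n : Nat.odd n = odd n.
Proof.
elim: n => [|n IH] //; rewrite Nat.odd_succ -Nat.negb_odd IH /=; by case: (odd n).
Qed.
Lemma bit_iter k x : odd (iter k half x) = Nat.testbit x k.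
Proof.
elim: k x => [|k IH] x; first by rewrite /= odd_Nat.
by rewrite iterSr IH /= (proj1 (div2_half x)).
Qed.

Lemma testbit_addpow a p j : a < Nat.pow 2 p ->
  Nat.testbit (a + Nat.pow 2 p) j = (p =? j) || Nat.testbit a j.
Proof.
move=> ha.
have hp : Nat.testbit a p = false.
  case: (posnP a) => [->|a0]; first exact: Nat.bits_0.
  apply: Nat.bits_above_log2; apply/Nat.log2_lt_pow2; [apply/ltP; lia | apply/ltP; lia].
have hl : Nat.land a (Nat.pow 2 p) = 0.
  apply: Nat.bits_inj => i; rewrite Nat.land_spec Nat.pow2_bits_eqb Nat.bits_0.
  case: (Nat.eqb_spec p i) => [<-|_]; by rewrite ?hp ?andbF.
have E : a + Nat.pow 2 p = Nat.lxor a (Nat.pow 2 p) by rewrite -(Nat.add_nocarry_lxor _ _ hl).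
rewrite E Nat.lxor_spec Nat.pow2_bits_eqb.
case: (Nat.eqb_spec p j) => [<-|_]; first by rewrite hp.
by case: (Nat.testbit a j).
Qed.

Lemma testbit_lt a k : Nat.testbit a k -> k < a.
Proof.
move=> H; case: (leqP a k) => // hak.
case: (posnP a) => [a0|a0]; first by move: H; rewrite a0 Nat.bits_0.
have hk : k < Nat.pow 2 k by apply/ltP; apply: Nat.pow_gt_lin_r; apply/ltP.
rewrite Nat.bits_above_log2 // in H.
apply/Nat.log2_lt_pow2; apply/ltP; lia.
Qed.

Lemma obits_spec n y : obits n y < Nat.pow 2 n /\
  forall k, Nat.testbit (obits n y) k = (k < n) && Nat.testbit y (k + k).+1.
Proof.
elim: n => [|n [IHb IHs]].
  by split => //= k; rewrite Nat.bits_0.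
change (obits n.+1 y) with (obits n y + odd (iter (n+n).+1 half y) * Nat.pow 2 n).
rewrite bit_iter; change (Nat.pow 2 n.+1) with (2 * Nat.pow 2 n); case E: (Nat.testbit y (n + n).+1).
- rewrite mul1n; split; first lia.
  move=> k; rewrite testbit_addpow // IHs.
  case: (Nat.eqb_spec n k) => [<-|nk]; first by rewrite ltnSn E.
  rewrite orFb; have [hk|hk|hk] := ltngtP k n.
  + by rewrite ltnS (ltnW hk).
  + by rewrite ltnS leqNgt hk.
  + by exfalso; apply: nk.
- rewrite mul0n addn0; split; first lia.
  move=> k; rewrite IHs; have [hk|hk|->] := ltngtP k n.
  + by rewrite ltnS (ltnW hk).
  + by rewrite ltnS leqNgt hk.
  + by rewrite E !andbF.
Qed.

Fixpoint sp n x := if n is n'.+1 then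
  sp n' x + Nat.testbit x n' * Nat.pow 2 (n' + n').+1 else 0.
Lemma sp_spec n x : sp n x < Nat.pow 2 (n + n) /\
  forall j, Nat.testbit (sp n x) j = [&& odd j, j./2 < n & Nat.testbit x j./2].
Proof.
elim: n => [|n [IHb IHs]].
  split => // j; by rewrite Nat.bits_0 /= !andbF.
change (sp n.+1 x) with (sp n x + Nat.testbit x n * Nat.pow 2 (n + n).+1).
have ej := odd_double_half.
have Hb : sp n x + Nat.testbit x n * Nat.pow 2 (n + n).+1 < Nat.pow 2 (n.+1 + n.+1).
  rewrite addSn addnS.
  change (Nat.pow 2 (n+n).+2) with (2 * (2 * Nat.pow 2 (n+n))).
  change (Nat.pow 2 (n+n).+1) with (2 * Nat.pow 2 (n+n)).
  case: (Nat.testbit x n) => /=; lia.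
split => // j; have hj := ej j; move: (odd j) (j./2) hj => o h <-.
have Eo : odd (o + h.*2) = o by rewrite oddD odd_double addbF; case: o.
case E: (Nat.testbit x n).
- rewrite mul1n testbit_addpow; last first.
    change (Nat.pow 2 (n+n).+1) with (2 * Nat.pow 2 (n+n)); lia.
  rewrite IHs Eo half_bit_double.
  case: (Nat.eqb_spec (n+n).+1 (o + h.*2)) => [e|ne].
  + have [-> ->] : o = true /\ h = n by case: o e Eo => /= e; rewrite -?addnn; lia.
    by rewrite ltnSn E.
  + rewrite orFb; case: o ne Eo => ne Eo //.
    have [hk|hk|hk] := ltngtP h n.
    * by rewrite ltnS (ltnW hk).
    * by rewrite ltnS leqNgt hk.
    * by exfalso; apply: ne; subst; rewrite -addnn; lia.
- rewrite mul0n addn0 IHs Eo half_bit_double.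
  case: o Eo => Eo //.
  have [hk|hk|->] := ltngtP h n.
  + by rewrite ltnS (ltnW hk).
  + by rewrite ltnS leqNgt hk.
  + by rewrite E !andbF.
Qed.

Lemma odd_half_S k : odd (k + k).+1 /\ ((k + k).+1)./2 = k.
Proof.
rewrite addnn -[(k.*2).+1]/(true + k.*2) oddD odd_double half_bit_double; done.
Qed.

Lemma obits_sp x : obits (sp x x) (sp x x) = x.
Proof.
apply: Nat.bits_inj => k; rewrite (proj2 (obits_spec _ _)) (proj2 (sp_spec _ _)).
have [o1 o2] := odd_half_S k; rewrite o1 o2 /=.
case H: (Nat.testbit x k); last by rewrite !andbF.
rewrite (testbit_lt H) /= andbT.
have h2 : (k + k).+1 < sp x x.
  by apply: testbit_lt; rewrite (proj2 (sp_spec _ _)) o1 o2 H (testbit_lt H).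
lia.
Qed.

Definition m0 := PProj 0.
Definition H1 := Sub (Succ one) (Add (OddP (Fst m0)) (Bit (Snd m0) (Half (Fst m0)))).
Definition H2 := Sub one (Bit (Snd m0) (Succ (Add (Fst m0) (Fst m0)))).
Definition H3 := Sub one (OddP (Fst m0)).
Definition C3 := Cp (Half (Fst m0)) (Snd m0).
Definition C4 := Cp (Fst m0) (Oddbits (Snd m0)).
Definition q3 p := PComp (PProj 0) [:: Halt H3; PComp p [:: C3]].
Definition q4 p := PComp p [:: C4].

Lemma W1 a x : (exists y, eval (Halt H1) [:: cpair a x] y) <-> odd a && Nat.testbit x a./2.
Proof.
have hH := c_Sub (c_Succ c_one) (c_Add (c_OddP (c_Fst (cmpt_proj 0)))
   (c_Bit (c_Snd (cmpt_proj 0)) (c_Half (c_Fst (cmpt_proj 0))))).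
rewrite (halt_spec _ hH); cbv beta.
rewrite [nth 0 _ 0]/= fstf_cpair sndf_cpair bit_iter.
by case: (odd a); case: (Nat.testbit x a./2).
Qed.
Lemma W2 a x : (exists y, eval (Halt H2) [:: cpair a x] y) <-> Nat.testbit x (a + a).+1.
Proof.
have hH := c_Sub c_one (c_Bit (c_Snd (cmpt_proj 0)) (c_Succ (c_Add (c_Fst (cmpt_proj 0)) (c_Fst (cmpt_proj 0))))).
rewrite (halt_spec _ hH); cbv beta.
rewrite [nth 0 _ 0]/= fstf_cpair sndf_cpair bit_iter.
by case: (Nat.testbit x (a + a).+1).
Qed.
Lemma W3 p a x : (exists y, eval (q3 p) [:: cpair a x] y) <->
  odd a /\ exists y, eval p [:: cpair a./2 x] y.
Proof.
have hH := c_Sub c_one (c_OddP (c_Fst (cmpt_proj 0))).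
have hC := c_Cp (c_Half (c_Fst (cmpt_proj 0))) (c_Snd (cmpt_proj 0)).
rewrite /q3 halt_pcomp2 (halt_spec _ hH) (halt_pcomp1 _ _ hC); cbv beta.
rewrite [nth 0 _ 0]/= fstf_cpair sndf_cpair -cpairE.
by case: (odd a); split => -[].
Qed.
Lemma W4 p a x : (exists y, eval (q4 p) [:: cpair a x] y) <->
  exists y, eval p [:: cpair a (obits x x)] y.
Proof.
have hC := c_Cp (c_Fst (cmpt_proj 0)) (c_Oddbits (c_Snd (cmpt_proj 0))).
rewrite /q4 (halt_pcomp1 _ _ hC); cbv beta.
by rewrite [nth 0 _ 0]/= fstf_cpair sndf_cpair -cpairE.
Qed.

Fixpoint encode (c : prf) : GenTree.tree nat :=
  match c with
  | PZero => GenTree.Node 0 [::]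
  | PSucc => GenTree.Node 1 [::]
  | PProj i => GenTree.Leaf i
  | PComp f gs => GenTree.Node 2 (encode f :: map encode gs)
  | PRec f g => GenTree.Node 3 [:: encode f; encode g]
  | PMu f => GenTree.Node 4 [:: encode f]
  end.

Definition tree_of i : GenTree.tree nat :=
  if (unpickle i : option (GenTree.tree nat)) is Some t then t else GenTree.Node 0 [::].
Lemma tree_ofE i : decode (tree_of i) = program i.
Proof. by rewrite /tree_of /program; case: unpickle. Qed.
Lemma programE t : program (pickle t) = decode t.
Proof. by rewrite /program pickleK. Qed.

Definition i1 := pickle (encode (Halt H1)).
Definition j1 := pickle (encode (Halt H2)).
Definition k3 i := pickle (GenTree.Node 2 [:: GenTree.Leaf 0; encode (Halt H3);
                       GenTree.Node 2 [:: tree_of i; encode C3]]).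
Definition k4 j := pickle (GenTree.Node 2 [:: tree_of j; encode C4]).

Lemma prog1 : program i1 = Halt H1.
Proof. rewrite /i1 programE; vm_compute; reflexivity. Qed.
Lemma prog2 : program j1 = Halt H2.
Proof. rewrite /j1 programE; vm_compute; reflexivity. Qed.
Lemma prog3 i : program (k3 i) = q3 (program i).
Proof.
rewrite /k3 programE -tree_ofE.
have e1 : decode (encode (Halt H3)) = Halt H3 by vm_compute; reflexivity.
have e2 : decode (encode C3) = C3 by vm_compute; reflexivity.
rewrite /q3 -[in RHS]e1 -[in RHS]e2; reflexivity.
Qed.
Lemma prog4 j : program (k4 j) = q4 (program j).
Proof.
rewrite /k4 programE -tree_ofE.
have e2 : decode (encode C4) = C4 by vm_compute; reflexivity.
rewrite /q4 -[in RHS]e2; reflexivity.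
Qed.

Lemma G1 X : Gamma_eq i1 X (join emptyset X).
Proof.
move=> n; split.
- move=> [x [Wx Hx]]; move: Wx; rewrite /W prog1 W1 => /andP [on tb].
  by rewrite /join on; apply: Hx.
- rewrite /join; case on: (odd n) => // Xn.
  exists (Nat.pow 2 n./2); split.
  + by rewrite /W prog1 W1 on Nat.pow2_bits_true.
  + move=> k; rewrite /canon Nat.pow2_bits_eqb; case: (Nat.eqb_spec n./2 k) => // <- _; exact: Xn.
Qed.

Lemma G2 X : Gamma_eq j1 (join emptyset X) X.
Proof.
move=> n; have [o1 o2] := odd_half_S n; split.
- move=> [x [Wx Hx]]; move: Wx; rewrite /W prog2 W2 => tb.
  by move: (Hx _ tb); rewrite /join o1 o2.
- move=> Xn; exists (Nat.pow 2 (n + n).+1); split.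
  + by rewrite /W prog2 W2 Nat.pow2_bits_true.
  + move=> k; rewrite /canon Nat.pow2_bits_eqb; case: (Nat.eqb_spec (n + n).+1 k) => // <- _.
    by rewrite /join o1 o2.
Qed.

Lemma G3 i A C : Gamma_eq i A C -> Gamma_eq (k3 i) A (join emptyset C).
Proof.
move=> hi n; split.
- move=> [x [Wx Hx]]; move: Wx; rewrite /W prog3 W3 => -[on Wx].
  rewrite /join on; apply/hi; exists x; split => //.
- rewrite /join; case on: (odd n) => // /hi [x [Wx Hx]].
  exists x; split => //; rewrite /W prog3 W3; split => //.
Qed.

Lemma G4 j A C : Gamma_eq j C A -> Gamma_eq (k4 j) (join emptyset C) A.
Proof.
move=> hj n; split.
- move=> [y [Wy Hy]]; move: Wy; rewrite /W prog4 W4 => Wy.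
  apply/hj; exists (obits y y); split => // k.
  rewrite /canon (proj2 (obits_spec _ _)) => /andP [_ tb].
  have [o1 o2] := odd_half_S k.
  by move: (Hy _ tb); rewrite /join o1 o2.
- move=> /hj [x [Wx Hx]]; exists (sp x x); split.
  + by rewrite /W prog4 W4 obits_sp.
  + move=> k; rewrite /canon (proj2 (sp_spec _ _)) => /and3P [ok _ tb].
    by rewrite /join ok; apply: Hx.
Qed.

Lemma deg_join A C : deg_e A C -> deg_e A (join emptyset C).
Proof.
move=> [[i hi] [j hj]]; split; [exists (k3 i); exact: G3 | exists (k4 j); exact: G4].
Qed.

Theorem lemma5p3 (A : natset) (f : natset -> natset) :
  uniformly_e_invariant (deg_e A) f ->
  not_constant_on (deg_e A) f ->
  exists B, deg_e A B /\
    (f (join A B) <> f (join A emptyset) \/ f (join A B) <> f (join emptyset B)).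
Proof.
move=> [u hu] [C [D [hC [hD hne]]]].
apply: NNPP => hno.
have key : forall B, deg_e A B -> f (join emptyset B) = f (join A emptyset).
  move=> B hB; apply: NNPP => hne'; apply: hno; exists B; split => //.
  case: (classic (f (join A B) = f (join A emptyset))) => e1; last by left.
  right => e2; apply: hne'; by rewrite -e2 e1.
have ev : forall B, deg_e A B -> exists i' j', u (cpair i1 j1) = cpair i' j' /\
    Gamma_eq j' (f (join emptyset B)) (f B).
  move=> B hB.
  have := hu B (join emptyset B) hB (deg_join hB) i1 j1.
  case.
    by exists i1, j1; split => //; split; [exact: G1 | exact: G2].
  move=> i' [j' [e [_ h]]]; by exists i', j'.
have [iC [jC [eC hCj]]] := ev C hC.
have [iD [jD [eD hDj]]] := ev D hD.
have [_ ej] := cpair_inj (etrans (esym eC) eD); subst jD.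
apply: hne; apply: functional_extensionality => n.
rewrite (key C hC) in hCj; rewrite (key D hD) in hDj.
apply/idP/idP => h.
- by apply/(proj1 (hDj n)); apply/(proj2 (hCj n)).
- by apply/(proj1 (hCj n)); apply/(proj2 (hDj n)).
Qed.
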